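(* Let $\nu$ be a finite positive Borel measure on the unit circle $\mathbb T$ whose support is infinite, and let $m_k=\int_{\mathbb T}z^k\,d\nu(z)$ for $k\ge0$. For each $N\ge1$ let $r_N\in[0,1)$ be the unique number for which $m_k=r_N^k\sum_{\alpha=1}^N\rho_\alpha e^{ik\phi_\alpha}$ ($k=0,\dots,N$) is solvable with $\rho_\alpha\ge0$, $\phi_\alpha\in[-\pi,\pi)$. Then the sequence $(r_N)_{N\ge1}$ is nondecreasing; in particular $\lim_{N\to\infty}r_N$ exists in $[0,1]$.
   Context: Equivalently, for $(m_1,\dots,m_N)\ne0$, $r_N$ is the unique $r\in(0,1)$ such that the minimum eigenvalue $\lambda(r;N)$ of the Hermitian Toeplitz matrix $H_N(\bm M_N^*(r))$ is $0$, where $\bm M_N^*(r)=(m_0,m_1r^{-1},\dots,m_Nr^{-N})$, $m_{-k}=\overline{m_k}$, and $H_N(\bm M)=(m_{l-j})_{j,l=0}^N$ (first row $(m_0,\dots,m_N)$, first column $(m_0,\overline{m_1},\dots,\overline{m_N})^T$); if $m_1=\dots=m_N=0$ then $r_N=0$. *)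

(* Defs.v *)
From HB Require Import structures.
From mathcomp Require Import all_boot all_order all_algebra.
From mathcomp Require Import all_classical all_reals all_analysis.
From mathcomp Require Import complex.
Set Implicit Arguments. Unset Strict Implicit. Unset Printing Implicit Defensive.
Import Order.TTheory GRing.Theory Num.Theory.
Import numFieldNormedType.Exports.
Local Open Scope classical_set_scope.
Local Open Scope ring_scope.
Local Open Scope complex_scope.

(* The plane R^2 is modeled as (R * R) with its product (= Borel) sigma-algebra;
   a point p corresponds to the complex number p.1 + i p.2. *)
Definition cpt {R : rcfType} (p : R * R) : R[i] := p.1 +i* p.2.

Definition unit_circle {R : realType} : set (R * R) :=
  [set p | p.1 ^+ 2 + p.2 ^+ 2 = 1].

Definition msupport {R : realType}
    (nu : {measure set (R * R)%type -> \bar R}) : set (R * R) :=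
  [set z | forall e : R, 0 < e -> (0 < nu (ball z e))%E].

Definition moment {R : realType}
    (nu : {measure set (R * R)%type -> \bar R}) (k : nat) : R[i] :=
  (Rintegral nu setT (fun p => complex.Re (cpt p ^+ k)))
    +i* (Rintegral nu setT (fun p => complex.Im (cpt p ^+ k))).

Definition expi {R : realType} (t : R) : R[i] := cos t +i* sin t.

Definition solvable {R : realType}
    (nu : {measure set (R * R)%type -> \bar R}) (N : nat) (r : R) : Prop :=
  exists (rho phi : 'I_N -> R),
    (forall a, 0 <= rho a) /\ (forall a, - pi <= phi a < pi) /\
    forall k : nat, (k <= N)%N ->
      moment nu k = (r%:C) ^+ k * \sum_(a < N) (rho a)%:C * expi (k%:R * phi a).

(* Main.v *)
Require Import Defs.
From HB Require Import structures.
From mathcomp Require Import all_boot all_order all_algebra.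
From mathcomp Require Import all_classical all_reals all_analysis.
From mathcomp Require Import complex ring lra.
Import Order.TTheory GRing.Theory Num.Theory.
Import numFieldNormedType.Exports.
Local Open Scope classical_set_scope.
Local Open Scope ring_scope.
Local Open Scope complex_scope.

Section E.
Variable R : realType.

Lemma expiD (x y : R) : expi (x + y) = expi x * expi y.
Proof. by rewrite /expi cosD sinD /=; congr (_ +i* _); ring. Qed.

Lemma expi0 : expi (0:R) = 1.
Proof. by rewrite /expi cos0 sin0. Qed.

Lemma expiX (k : nat) (x : R) : expi (k%:R * x) = expi x ^+ k.
Proof.
elim: k => [|k IH]; first by rewrite mul0r expi0 expr0.
by rewrite -addn1 natrD mulrDl mul1r expiD IH exprD expr1.
Qed.

Lemma expiJ (x : R) : expi x * (expi x)^* = 1.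
Proof.
rewrite /expi /=; apply/eqP; rewrite eq_complex /=; apply/andP; split; apply/eqP.
  by rewrite -(cos2Dsin2 x); ring.
by ring.
Qed.
End E.

Section S.
Variable R : realType.
Variable t : R.

Definition tp (j l : nat) : R := t ^+ (if (l <= j)%N then (j - l)%N else (l - j)%N).
Definition kap (i : nat) : R := if i == 0%N then 1 else 1 - t ^+ 2.

Lemma P1 m d : \sum_(0 <= i < m.+1) kap i * (t ^+ (m + d - i)%N * t ^+ (m - i)%N) = t ^+ d.
Proof.
elim: m => [|m IH].
  by rewrite big_nat1 /kap /= add0n !subn0 expr0 mulr1 mul1r.
rewrite big_nat_recr //= subnn addKn expr0 mulr1 {2}/kap /=.
rewrite (eq_big_nat _ _ (F2 := fun i => t ^+ 2 * (kap i * (t ^+ (m + d - i)%N * t ^+ (m - i)%N)))).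
  by rewrite -mulr_sumr IH; ring.
move=> i /andP[_ Hi]; have h1 : (i <= m)%N := Hi.
have h2 : (i <= m + d)%N := leq_trans h1 (leq_addr d m).
rewrite addSn !subSn //.
by rewrite !exprS; ring.
Qed.

Definition ai (i j : nat) : R := if (i <= j)%N then t ^+ (j - i)%N else 0.

Lemma P2sym n j l : (l <= j)%N -> (j <= n)%N ->
  \sum_(i < n.+1) kap i * (ai i j * ai i l) = tp j l.
Proof.
move=> lj jn; rewrite /tp lj.
rewrite -(big_mkord xpredT (fun i => kap i * (ai i j * ai i l))).
rewrite (big_cat_nat _ (n:=l.+1)) //=; last by rewrite ltnS (leq_trans lj jn).
rewrite [X in _ + X]big1_seq ?addr0; last first.
  move=> i /andP[_]; rewrite mem_index_iota; case/andP => Hi _.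
  by rewrite /ai (leqNgt i l) Hi /= !mulr0.
move: (j - l)%N (subnKC lj) => d <-; rewrite -(P1 l d).
apply: eq_big_nat => i /andP[_ Hi].
have h1 : (i <= l)%N := Hi.
by rewrite /ai h1 (leq_trans h1 (leq_addr _ _)).
Qed.

Lemma P2 n j l : (j <= n)%N -> (l <= n)%N ->
  \sum_(i < n.+1) kap i * (ai i j * ai i l) = tp j l.
Proof.
move=> jn ln; case: (leqP l j) => h; first exact: P2sym.
rewrite (eq_bigr (fun i : 'I_n.+1 => kap i * (ai i l * ai i j))); last by move=> i _; rewrite [ai i l * _]mulrC.
rewrite P2sym //; last exact: ltnW.
by rewrite /tp (ltnW h) leqNgt h.
Qed.

Lemma cR (a : R) : (a%:C)^* = a%:C :> R[i].
Proof. by apply/eqP; rewrite eq_complex /= oppr0 !eqxx. Qed.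

Lemma cR2 (a : R) : Num.conj (a%:C : R[i]) = a%:C.
Proof. exact: cR. Qed.
Lemma KMSid n (x : 'I_n.+1 -> R[i]) :
  \sum_(j < n.+1) \sum_(l < n.+1) x j * (x l)^* * (tp j l)%:C =
  \sum_(i < n.+1) (kap i)%:C * ((\sum_(j < n.+1) (ai i j)%:C * x j) *
                                (\sum_(j < n.+1) (ai i j)%:C * x j)^*).
Proof.
have E : forall i : 'I_n.+1, (kap i)%:C * ((\sum_(j < n.+1) (ai i j)%:C * x j) *
                                (\sum_(j < n.+1) (ai i j)%:C * x j)^*) =
   \sum_(j < n.+1) \sum_(l < n.+1) x j * (x l)^* * (kap i * (ai i j * ai i l))%:C.
  move=> i; rewrite rmorph_sum /= mulr_suml mulr_sumr; apply: eq_bigr => j _.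
  rewrite mulr_sumr mulr_sumr; apply: eq_bigr => l _.
  by rewrite rmorphM /= cR2 !rmorphM /=; ring.
rewrite [RHS](eq_bigr _ (fun i _ => E i)) [RHS]exchange_big /=; apply: eq_bigr => j _.
rewrite [RHS]exchange_big /=; apply: eq_bigr => l _.
by rewrite -mulr_sumr -rmorph_sum P2 // -ltnS.
Qed.

Lemma nnC (z : R[i]) : 0 <= z * z^*.
Proof.
case: z => a b; rewrite lecE /=; apply/andP; split.
  by apply/eqP; ring.
rewrite (_ : a * a - b * - b = a ^+ 2 + b ^+ 2); last by ring.
by rewrite addr_ge0 // sqr_ge0.
Qed.

Lemma kap_ge0 i : 0 <= t -> t < 1 -> 0 <= kap i.
Proof.
move=> t0 t1; rewrite /kap; case: (i == 0%N) => //.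
by rewrite subr_ge0 expr2 mulr_ile1 // ltW.
Qed.

Lemma KMSbound n (x : 'I_n.+1 -> R[i]) : 0 <= t -> t < 1 ->
  (1 - t ^+ 2)%:C * (x ord_max * (x ord_max)^*) <=
  \sum_(j < n.+1) \sum_(l < n.+1) x j * (x l)^* * (tp j l)%:C.
Proof.
move=> t0 t1; rewrite KMSid (bigD1 ord_max) //=.
rewrite -[X in X <= _]addr0; apply: lerD; last first.
  apply: sumr_ge0 => i _; apply: mulr_ge0; first by rewrite lecE /= eqxx /=; exact: kap_ge0.
  exact: nnC.
have -> : \sum_(j < n.+1) (ai n j)%:C * x j = x ord_max.
  rewrite (bigD1 ord_max) //= big1 ?addr0.
    by rewrite /ai leqnn subnn expr0 mul1r.
  move=> j; rewrite -val_eqE /= => jn.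
  have jlt : (j < n)%N by rewrite ltn_neqAle jn -ltnS ltn_ord.
  by rewrite /ai leqNgt jlt /= mul0r.
apply: ler_wpM2r; first exact: nnC.
rewrite lecR /kap; case: (n == 0%N) => //.
by rewrite gerBl sqr_ge0.
Qed.
End S.

Section T.
Variable R : realType.
Local Notation C := (R[i]).
Local Notation cj := (@Num.conj _).

Lemma uX (w : C) n : w * cj w = 1 -> w ^+ n * cj (w ^+ n) = 1.
Proof.
move=> hw; elim: n => [|n IH]; first by rewrite !expr0 rmorph1 mulr1.
by rewrite exprS rmorphM /= mulrACA hw IH mulr1.
Qed.

Lemma wpow1 (w : C) j l : w * cj w = 1 -> (l <= j)%N ->
  w ^+ (j - l) = w ^+ j * cj (w ^+ l).
Proof.
move=> hw lj; rewrite -{2}(subnK lj) exprD -mulrA uX // mulr1 //.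
Qed.

Lemma wpow2 (w : C) j l : w * cj w = 1 -> (j <= l)%N ->
  cj (w ^+ (l - j)) = w ^+ j * cj (w ^+ l).
Proof.
move=> hw jl; rewrite -{2}(subnK jl) exprD rmorphM /=.
by rewrite -[LHS]mulr1 -(uX w j hw) mulrCA mulrA.
Qed.

Definition Ep (s : R) {K} (rho : 'I_K -> R) (w : 'I_K -> C) (j l : nat) : C :=
  if (l <= j)%N then (s ^+ (j - l))%:C * \sum_(a < K) (rho a)%:C * w a ^+ (j - l)
  else cj ((s ^+ (l - j))%:C * \sum_(a < K) (rho a)%:C * w a ^+ (l - j)).

Lemma Ep_pt s K rho (w : 'I_K -> C) j l : (forall a, w a * cj (w a) = 1) ->
  Ep s rho w j l =
  \sum_(a < K) (rho a)%:C * ((tp R s j l)%:C * (w a ^+ j * cj (w a ^+ l))).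
Proof.
move=> hw; rewrite /Ep /tp; case: (leqP l j) => h.
  rewrite mulr_sumr; apply: eq_bigr => a _.
  by rewrite -wpow1 //; ring.
rewrite rmorphM /= cR2 rmorph_sum mulr_sumr; apply: eq_bigr => a _.
by rewrite rmorphM /= cR2 wpow2 ?(ltnW h) //; ring.
Qed.

Lemma G s K rho (w : 'I_K -> C) n (c : 'I_n.+1 -> C) : (forall a, w a * cj (w a) = 1) ->
  \sum_(j < n.+1) \sum_(l < n.+1) c j * cj (c l) * Ep s rho w j l =
  \sum_(a < K) (rho a)%:C * \sum_(j < n.+1) \sum_(l < n.+1)
      (c j * w a ^+ j) * cj (c l * w a ^+ l) * (tp R s j l)%:C.
Proof.
move=> hw.
under [RHS]eq_bigr do rewrite mulr_sumr.
rewrite [RHS]exchange_big /=; apply: eq_bigr => j _.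
under [RHS]eq_bigr do rewrite mulr_sumr.
rewrite [RHS]exchange_big /=; apply: eq_bigr => l _.
rewrite Ep_pt // mulr_sumr; apply: eq_bigr => a _.
by rewrite rmorphM /=; ring.
Qed.

Lemma key N M (t : R) (rho : 'I_N -> R) (w : 'I_N -> C) (sig : 'I_M -> R) (v : 'I_M -> C) :
  0 <= t -> t < 1 -> (forall b, 0 <= sig b) ->
  (forall a, w a * cj (w a) = 1) -> (forall b, v b * cj (v b) = 1) ->
  0 < \sum_(b < M) sig b ->
  (forall k, (k <= N)%N -> \sum_(a < N) (rho a)%:C * w a ^+ k =
       (t%:C) ^+ k * \sum_(b < M) (sig b)%:C * v b ^+ k) -> False.
Proof.
move=> t0 t1 sig0 hw hv sigpos hk.
pose p : {poly C} := \prod_(a <- enum 'I_N) ('X - (w a)%:P).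
have szp : size p = N.+1 by rewrite size_prod_XsubC size_enum_ord.
have pN : p`_N = 1.
  have := monicP (monic_prod_XsubC (enum 'I_N) xpredT w).
  by rewrite /lead_coef szp.
have rt : forall a, p.[w a] = 0.
  move=> a; apply/rootP; rewrite /p -(big_map w xpredT (fun z => 'X - z%:P)).
  by rewrite root_prod_XsubC; apply: map_f; rewrite mem_enum.
pose c (j : 'I_N.+1) := p`_j.
have hor : forall z, \sum_(j < N.+1) c j * z ^+ j = p.[z].
  by move=> z; rewrite (horner_coef_wide _ (leqnn _)) szp.
pose Q := \sum_(j < N.+1) \sum_(l < N.+1) c j * cj (c l) * Ep 1 rho w j l.
have QA : Q = 0.
  rewrite /Q G //; apply: big1 => a _.
  have -> : \sum_(j < N.+1) \sum_(l < N.+1)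
      (c j * w a ^+ j) * cj (c l * w a ^+ l) * (tp R 1 j l)%:C =
      (\sum_(j < N.+1) c j * w a ^+ j) * cj (\sum_(j < N.+1) c j * w a ^+ j).
    rewrite mulr_suml; apply: eq_bigr => j _.
    rewrite rmorph_sum mulr_sumr; apply: eq_bigr => l _.
    by rewrite /tp expr1n rmorph1 mulr1.
  by rewrite hor rt mul0r mulr0.
have QB : Q = \sum_(b < M) (sig b)%:C * \sum_(j < N.+1) \sum_(l < N.+1)
      (c j * v b ^+ j) * cj (c l * v b ^+ l) * (tp R t j l)%:C.
  rewrite -G //; apply: eq_bigr => j _; apply: eq_bigr => l _; congr (_ * _).
  have jN : (j <= N)%N by rewrite -ltnS.
  have lN : (l <= N)%N by rewrite -ltnS.
  rewrite /Ep; case: (leqP l j) => h.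
    by rewrite expr1n rmorph1 mul1r hk ?rmorphXn // (leq_trans (leq_subr _ _) jN).
  by rewrite expr1n rmorph1 mul1r hk ?rmorphXn // (leq_trans (leq_subr _ _) lN).
have tpos : 0 < 1 - t ^+ 2 by nra.
have : ((\sum_(b < M) sig b) * (1 - t ^+ 2))%:C <= Q.
  rewrite QB rmorphM rmorph_sum /= mulr_suml; apply: ler_sum => b _.
  apply: ler_wpM2l; first by rewrite lecE /= eqxx /=; exact: sig0.
  apply: le_trans (@KMSbound R t N (fun j => c j * v b ^+ j) t0 t1).
  rewrite /c /= pN mul1r uX // mulr1 //.
rewrite QA lecE /= eqxx /= => H.
have : 0 < (\sum_(b < M) sig b) * (1 - t ^+ 2) by apply: mulr_gt0.
by rewrite ltNge H.
Qed.
End T.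

Lemma moment0 (R : realType) (nu : {finite_measure set (R * R)%type -> \bar R}) :
  moment nu 0 = (fine (nu setT))%:C.
Proof.
rewrite /moment.
have -> : (fun p : R * R => complex.Re (cpt p ^+ 0)) = fun _ => 1.
  by apply: funext => p; rewrite expr0.
have -> : (fun p : R * R => complex.Im (cpt p ^+ 0)) = fun _ => 0.
  by apply: funext => p; rewrite expr0.
by rewrite !Rintegral_cst // mul1r mul0r.
Qed.

Lemma nuT_pos (R : realType) (nu : {finite_measure set (R * R)%type -> \bar R}) :
  ~ finite_set (msupport nu) -> 0 < fine (nu setT).
Proof.
move=> inf.
have fin : nu setT \is a fin_num by apply: fin_num_measure.
have ge0 : (0 <= nu setT)%E by apply: measure_ge0.
have ne0 : nu setT <> 0%E.
  move=> h; apply: inf.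
  have -> : msupport nu = set0; last exact: finite_set0.
  apply/seteqP; split => // z /= /(_ 1 ltr01).
  have mb : measurable (ball z 1 : set (R*R)).
    change (measurable (ball z.1 1 `*` ball z.2 1)).
    by apply: measurableX; rewrite ball_itv; exact: measurable_itv.
  have := le_measure nu (x := ball z 1) (y := setT).
  rewrite !inE => /(_ mb measurableT (@subsetT _ _)) h1 h2.
  have h1' : (nu (ball z 1) <= nu setT)%E := h1.
  have h2' : (0 < nu (ball z 1))%E := h2.
  by rewrite h in h1'; have := lt_le_trans h2' h1'; rewrite ltxx.
move: fin ge0 ne0; case: (nu setT) => //= x _; rewrite lee_fin => x0 xne.
by rewrite lt_neqAle x0 andbT eq_sym; apply/eqP => x00; apply: xne; rewrite x00.
Qed.

Lemma mono (R : realType)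
    (nu : {finite_measure set (R * R)%type -> \bar R}) (a b : R) N M :
  ~ finite_set (msupport nu) -> (0 < N)%N -> (N <= M)%N ->
  0 <= a < 1 -> solvable nu N a -> 0 <= b < 1 -> solvable nu M b -> a <= b.
Proof.
move=> inf N0 NM /andP[a0 a1] [rho [phi [_ [_ hN]]]] /andP[b0 b1] [sig [psi [sig0 [_ hM]]]].
rewrite leNgt; apply/negP => ba.
have apos : 0 < a by apply: le_lt_trans ba.
have sigpos : 0 < \sum_(b < M) sig b.
  have := hM 0%N (leq0n _); rewrite moment0 expr0 mul1r.
  under eq_bigr do rewrite mul0r expi0 mulr1.
  rewrite -rmorph_sum => /complexI <-; exact: nuT_pos.
apply: (@key R N M (b / a) rho (fun x => expi (phi x)) sig (fun x => expi (psi x))).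
- by rewrite divr_ge0 // ltW.
- by rewrite ltr_pdivrMr // mul1r.
- exact: sig0.
- by move=> x; exact: expiJ.
- by move=> x; exact: expiJ.
- exact: sigpos.
move=> k kN.
have ha : (a%:C : R[i]) ^+ k != 0.
  rewrite expf_neq0 //; apply/eqP => -[] a00.
  by move: apos; rewrite a00 ltxx.
apply: (mulfI ha).
have E1 : forall (K : nat) (f : 'I_K -> R) (g : 'I_K -> R),
    \sum_(x < K) (f x)%:C * expi (k%:R * g x) = \sum_(x < K) (f x)%:C * expi (g x) ^+ k.
  by move=> K f g; apply: eq_bigr => x _; rewrite expiX.
rewrite -E1 -hN // mulrA -exprMn -rmorphM mulrCA divff ?mulr1; last by rewrite gt_eqF.
by rewrite -E1 -hM // (leq_trans kN NM).
Qed.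

Local Close Scope complex_scope.

Theorem mainTheorem7 (R : realType)
    (nu : {finite_measure set (R * R)%type -> \bar R})
    (r : nat -> R) :
  nu (~` unit_circle) = 0%E ->
  ~ finite_set (msupport nu) ->
  (forall N : nat, (0 < N)%N -> (0 <= r N < 1) /\ solvable nu N (r N)) ->
  (forall N M : nat, (0 < N)%N -> (N <= M)%N -> r N <= r M) /\
  (exists l : R, 0 <= l <= 1 /\ r @ \oo --> l).
Proof.
move=> _ inf H.
have mon : forall N M : nat, (0 < N)%N -> (N <= M)%N -> r N <= r M.
  move=> N M N0 NM; have [h1 h2] := H N N0; have [h3 h4] := H M (leq_trans N0 NM).
  exact: (@mono R nu _ _ N M inf N0 NM h1 h2 h3 h4).
split => //.
pose u n := r n.+1.
have nd : nondecreasing_seq u by move=> n m nm; apply: mon.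
have ub : has_ubound (range u).
  by exists 1 => _ [n _ <-]; have [/andP[_ /ltW]] := H n.+1 (ltn0Sn n).
have cv := nondecreasing_cvgn nd ub.
exists (sup (range u)); split; last by rewrite -cvg_shiftS.
have hs : has_sup (range u) by split => //; exists (u 0%N), 0%N.
apply/andP; split.
  apply: le_trans (sup_upper_bound hs (x := u 0%N) _); last by exists 0%N.
  by have [/andP[]] := H 1%N (ltn0Sn 0).
apply: ge_sup; first by exists (u 0%N), 0%N.
by move=> _ [n _ <-]; have [/andP[_ /ltW]] := H n.+1 (ltn0Sn n).
Qed.
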